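(* Let $d\ge 3$, integer $\nu\ge 1$, $s>0$, $z\ge 0$. The function $$\zeta(\lambda_1,\dots,\lambda_\nu)=\frac{\prod_{i=1}^\nu\lambda_i^{d/2-2}}{(\sum_{i=1}^\nu\lambda_i+s)^{d/2}}\exp\!\left(-\frac{\sum_i\lambda_i}{\sum_i\lambda_i+s}\,z\right),\qquad \lambda\in(0,\infty)^\nu,$$ is multivariate totally positive of order two (MTP2), i.e. $\zeta(\lambda)\zeta(\xi)\le\zeta(\lambda\vee\xi)\zeta(\lambda\wedge\xi)$ for all $\lambda,\xi\in(0,\infty)^\nu$, where $\vee,\wedge$ denote componentwise maximum and minimum. *)

(* Defs.v *)
From Stdlib Require Import Reals.
Open Scope R_scope.

(* Sum and product of f 0, ..., f (n-1); vectors in (0,oo)^nu are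
   represented as functions nat -> R, only indices i < nu matter. *)
Fixpoint rsum (n : nat) (f : nat -> R) : R :=
  match n with O => 0 | S k => rsum k f + f k end.

Fixpoint rprod (n : nat) (f : nat -> R) : R :=
  match n with O => 1 | S k => rprod k f * f k end.

Definition zeta (d : R) (nu : nat) (s z : R) (lam : nat -> R) : R :=
  let S := rsum nu lam in
  rprod nu (fun i => Rpower (lam i) (d / 2 - 2)) / Rpower (S + s) (d / 2)
  * exp (- (S / (S + s)) * z).

Definition vmax (lam xi : nat -> R) : nat -> R := fun i => Rmax (lam i) (xi i).
Definition vmin (lam xi : nat -> R) : nat -> R := fun i => Rmin (lam i) (xi i).

(* Main.v *)
Require Import Defs.
From Stdlib Require Import Reals Lra Psatz.
Open Scope R_scope.

Lemma rprod_mul n f g : rprod n f * rprod n g = rprod n (fun i => f i * g i).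
Proof. induction n; simpl; [ring|rewrite <- IHn; ring]. Qed.

Lemma rprod_ext n f g : (forall i, (i < n)%nat -> f i = g i) -> rprod n f = rprod n g.
Proof. induction n; intros H; simpl; auto. rewrite IHn, H; auto. Qed.

Lemma rprod_pos n f : (forall i, 0 < f i) -> 0 < rprod n f.
Proof. intros H; induction n; simpl; [lra|]. apply Rmult_lt_0_compat; auto. Qed.

Lemma rsum_add n f g : rsum n f + rsum n g = rsum n (fun i => f i + g i).
Proof. induction n; simpl; [ring|rewrite <- IHn; ring]. Qed.

Lemma rsum_le n f g : (forall i, (i < n)%nat -> f i <= g i) -> rsum n f <= rsum n g.
Proof. induction n; intros H; simpl; [lra|].
  assert (rsum n f <= rsum n g) by (apply IHn; auto). specialize (H n). lia || (assert (f n <= g n) by auto; lra). Qed.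

Lemma rsum_ext n f g : (forall i, (i < n)%nat -> f i = g i) -> rsum n f = rsum n g.
Proof. induction n; intros H; simpl; auto. rewrite IHn, H; auto. Qed.

Lemma rsum_nonneg n f : (forall i, (i < n)%nat -> 0 <= f i) -> 0 <= rsum n f.
Proof. intros H. replace 0 with (rsum n (fun _ => 0)).
  apply rsum_le; auto. clear H; induction n; simpl; auto; rewrite IHn; ring. Qed.

Lemma key (P1 P2 P3 P4 R1 R2 R3 R4 E1 E2 E3 E4 : R) :
  P1*P2 = P3*P4 -> 0 < P3 -> 0 < P4 -> 0 < R1 -> 0 < R2 -> 0 < R3 -> 0 < R4 ->
  R3*R4 <= R1*R2 -> E1*E2 <= E3*E4 -> 0 < E1 -> 0 < E2 ->
  P1/R1*E1*(P2/R2*E2) <= P3/R3*E3*(P4/R4*E4).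
Proof.
  intros HP. intros.
  replace (P1/R1*E1*(P2/R2*E2)) with ((P1*P2)*(E1*E2) * / (R1*R2)) by (field; lra).
  replace (P3/R3*E3*(P4/R4*E4)) with ((P3*P4)*(E3*E4) * / (R3*R4)) by (field; lra).
  rewrite HP. apply Rmult_le_compat.
  - apply Rmult_le_pos; apply Rlt_le; apply Rmult_lt_0_compat; auto.
  - apply Rlt_le, Rinv_0_lt_compat, Rmult_lt_0_compat; auto.
  - apply Rmult_le_compat_l; auto. apply Rlt_le, Rmult_lt_0_compat; auto.
  - apply Rinv_le_contravar; auto. apply Rmult_lt_0_compat; auto.
Qed.

Lemma exp_mono a b : a <= b -> exp a <= exp b.
Proof. intros H. destruct (Rle_lt_or_eq_dec _ _ H) as [h|h].
  apply Rlt_le, exp_increasing; auto. rewrite h; lra. Qed.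

Lemma key2 s z Tl Tx TM Tm : 0 < s -> 0 <= z -> 0 < Tl -> 0 < Tx -> 0 < TM -> 0 < Tm ->
  TM + Tm = Tl + Tx -> Tm*TM <= Tl*Tx ->
  -((Tl - s)/Tl)*z + -((Tx - s)/Tx)*z <= -((TM - s)/TM)*z + -((Tm - s)/Tm)*z.
Proof.
  intros. 
  replace (-((Tl - s)/Tl)*z + -((Tx - s)/Tx)*z) with (z*(s*(Tl+Tx)*/(Tl*Tx)) - 2*z) by (field; lra).
  replace (-((TM - s)/TM)*z + -((Tm - s)/Tm)*z) with (z*(s*(Tl+Tx)*/(Tm*TM)) - 2*z) by (rewrite <- H5; field; lra).
  apply Rplus_le_compat_r, Rmult_le_compat_l; auto. apply Rmult_le_compat_l. nra.
  apply Rinv_le_contravar; auto. nra.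
Qed.

Theorem lemma3 (d : R) (nu : nat) (s z : R)
  (hd : 3 <= d) (hnu : (1 <= nu)%nat) (hs : 0 < s) (hz : 0 <= z)
  (lam xi : nat -> R)
  (hlam : forall i, (i < nu)%nat -> 0 < lam i)
  (hxi : forall i, (i < nu)%nat -> 0 < xi i) :
  zeta d nu s z lam * zeta d nu s z xi
  <= zeta d nu s z (vmax lam xi) * zeta d nu s z (vmin lam xi).
Proof.
  unfold zeta. cbv zeta.
  set (Sl := rsum nu lam). set (Sx := rsum nu xi).
  set (SM := rsum nu (vmax lam xi)). set (Sm := rsum nu (vmin lam xi)).
  assert (Hsum : SM + Sm = Sl + Sx).
  { unfold SM, Sm, Sl, Sx. rewrite !rsum_add. apply rsum_ext. intros i _.
    unfold vmax, vmin, Rmax, Rmin. destruct (Rle_dec (lam i) (xi i)); ring. }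
  assert (H1 : Sm <= Sl) by (apply rsum_le; intros; unfold vmin; apply Rmin_l).
  assert (H2 : Sm <= Sx) by (apply rsum_le; intros; unfold vmin; apply Rmin_r).
  assert (H0 : 0 <= Sm).
  { apply rsum_nonneg; intros i Hi. unfold vmin, Rmin.
    destruct (Rle_dec (lam i) (xi i)); [specialize (hlam i Hi)|specialize (hxi i Hi)]; lra. }
  assert (Hprod : Sm + s <= Sl + s -> Sm + s <= Sx + s -> (Sm+s)*(SM+s) <= (Sl+s)*(Sx+s)) by nra.
  assert (HT : (Sm+s)*(SM+s) <= (Sl+s)*(Sx+s)) by (apply Hprod; lra).
  apply key.
  - rewrite !rprod_mul. apply rprod_ext. intros i _.
    unfold vmax, vmin, Rmax, Rmin. destruct (Rle_dec (lam i) (xi i)); ring.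
  - apply rprod_pos; intros; apply exp_pos.
  - apply rprod_pos; intros; apply exp_pos.
  - apply exp_pos.
  - apply exp_pos.
  - apply exp_pos.
  - apply exp_pos.
  - rewrite !Rpower_mult_distr by lra. apply Rle_Rpower_l; [lra|].
    split; [|lra]. apply Rmult_lt_0_compat; lra.
  - rewrite <- !exp_plus. apply exp_mono.
    pose proof (key2 s z (Sl+s) (Sx+s) (SM+s) (Sm+s)) as K.
    replace (Sl + s - s) with Sl in K by ring. replace (Sx + s - s) with Sx in K by ring.
    replace (SM + s - s) with SM in K by ring. replace (Sm + s - s) with Sm in K by ring.
    apply K; lra.
  - apply exp_pos.
  - apply exp_pos.
Qed.
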